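(* Let $N=n+k$. The Bethe ansatz equations $$(-1)^n\frac{\Pi(y)}{(1+\beta y_i)^n}\prod_{j=1}^N y_i\ominus t_j+q=0,\qquad i=1,\dots,n,$$ for $y=(y_1,\dots,y_n)$ have $\binom{N}{n}$ pairwise distinct solutions $y_\lambda=(y_{\lambda_n+1},\dots,y_{\lambda_2+n-1},y_{\lambda_1+n})$, $\lambda\subset(k^n)$, whose components are formal power series in $q$ with coefficients rational functions of $t_1,\dots,t_N$ and $\beta$, and, for $i\in I_\lambda$, up to first order in $q$, $$y_i=t_i+q\,(-1)^{n-1}\frac{(1+\beta t_i)^{n+1}}{\Pi(t_\lambda)\prod_{j\neq i}t_i\ominus t_j}+O(q^2),$$ the product running over $j\in\{1,\dots,N\}\setminus\{i\}$.
   Context: $\beta$ indeterminate, $x\ominus y=(x-y)/(1+\beta y)$, $\Pi(y)=\prod_{i=1}^n(1+\beta y_i)$. For $\lambda\subset(k^n)$ (at most $n$ parts, each $\le k$), $I_\lambda=\{\lambda_{n+1-i}+i:1\le i\le n\}$ and $t_\lambda=(t_i)_{i\in I_\lambda}$, $\Pi(t_\lambda)=\prod_{i\in I_\lambda}(1+\beta t_i)$. *)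

(* Defs.v *)
From HB Require Import structures.
From mathcomp Require Import all_boot all_order all_algebra.
From mathcomp Require Import fraction.
From mathcomp Require Import mpoly.
Set Implicit Arguments. Unset Strict Implicit. Unset Printing Implicit Defensive.
Import Order.TTheory GRing.Theory Num.Theory.
Local Open Scope ring_scope.

(* Variables 'X_0 .. 'X_(N-1) are t_1 .. t_N, variable 'X_N is beta.   *)
Definition RatFun (N : nat) := {fraction {mpoly rat[N.+1]}}.

Definition beta (N : nat) : RatFun N := tofrac ('X_(@ord_max N) : {mpoly rat[N.+1]}).

(* t_j for j = 1..N (1-indexed, as in the paper). *)
Definition tvar (N : nat) (j : nat) : RatFun N :=
  tofrac ('X_(@inord N j.-1) : {mpoly rat[N.+1]}).

Definition ps (K : fieldType) := nat -> K.

Section PS.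
Variable K : fieldType.

Definition ps_const (c : K) : ps K := fun m => if m == 0%N then c else 0.
Definition ps_one : ps K := ps_const 1.
Definition ps_q : ps K := fun m => if m == 1%N then 1 else 0.
Definition ps_add (f g : ps K) : ps K := fun m => f m + g m.
Definition ps_scale (c : K) (f : ps K) : ps K := fun m => c * f m.
Definition ps_mul (f g : ps K) : ps K :=
  fun m => \sum_(i < m.+1) f i * g (m - i)%N.
Definition ps_exp (f : ps K) (e : nat) : ps K := iter e (ps_mul f) ps_one.

(* Multiplicative inverse of a series (meaningful when f 0 != 0):
   g 0 = (f 0)^-1,  g m = - (f 0)^-1 * \sum_(i < m) f (m - i) * g i. *)
Fixpoint ps_inv_seq (f : ps K) (m : nat) : seq K :=
  match m with
  | 0 => [:: (f 0%N)^-1]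
  | m'.+1 => let s := ps_inv_seq f m' in
             rcons s (- (f 0%N)^-1 * \sum_(i < m'.+1) f (m'.+1 - i)%N * nth 0 s i)
  end.
Definition ps_inv (f : ps K) : ps K := fun m => nth 0 (ps_inv_seq f m) m.

End PS.

Definition ps_ominus N (x : ps (RatFun N)) (c : RatFun N) : ps (RatFun N) :=
  fun m => (x m - ps_const c m) / (1 + beta N * c).

Definition ominus N (x y : RatFun N) : RatFun N := (x - y) / (1 + beta N * y).

(* Partitions lambda inside the n x k box: lambda_1 >= ... >= lambda_n, *)
(* each in 0..k, stored as a tuple (tnth l (i-1) = lambda_i).           *)
Definition lam_pred (n k : nat) : pred (n.-tuple 'I_k.+1) :=
  fun l => sorted (fun a b : 'I_k.+1 => (b <= a)%N) l.
Notation Lam n k := (sig (fun x : n.-tuple _ => is_true (@lam_pred n k x))) (only parsing).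

(* The index attached to position p (0-indexed, p = i - 1) of y_lambda:
   lambda_{n+1-i} + i, an element of I_lambda. *)
Definition Iidx (n k : nat) (l : Lam n k) (p : 'I_n) : nat :=
  (tnth (val l) (rev_ord p) + p.+1)%N.

Definition PiY N n (y : 'I_n -> ps (RatFun N)) : ps (RatFun N) :=
  \big[@ps_mul _/ps_one _]_(i < n)
     ps_add (ps_one _) (ps_scale (beta N) (y i)).

Definition BAE_lhs N n (y : 'I_n -> ps (RatFun N)) (i : 'I_n) : ps (RatFun N) :=
  ps_add
    (ps_scale ((-1) ^+ n)
       (ps_mul (ps_mul (PiY y)
                       (ps_inv (ps_exp (ps_add (ps_one _) (ps_scale (beta N) (y i))) n)))
               (\big[@ps_mul _/ps_one _]_(j < N) ps_ominus (y i) (tvar N j.+1))))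
    (ps_q _).

Definition PiT n k (l : Lam n k) : RatFun (n + k) :=
  \prod_(p < n) (1 + beta (n + k) * tvar (n + k) (Iidx l p)).

Definition first_coef n k (l : Lam n k) (a : nat) : RatFun (n + k) :=
  (-1) ^+ n.-1 * (1 + beta (n + k) * tvar (n + k) a) ^+ n.+1 /
  (PiT l * \prod_(j < n + k | j.+1 != a)
             ominus (tvar (n + k) a) (tvar (n + k) j.+1)).

(* Main.v *)
Require Import Defs.
From HB Require Import structures.
From mathcomp Require Import all_boot all_order all_algebra.
From mathcomp Require Import fraction.
From mathcomp Require Import mpoly.
From Stdlib Require Import FunctionalExtensionality.
Set Implicit Arguments. Unset Strict Implicit. Unset Printing Implicit Defensive.
Import Order.TTheory GRing.Theory Num.Theory.
Local Open Scope ring_scope.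

Section PSL.
Variable K : fieldType.
Implicit Types f g h : ps K.

Definition eqm (m : nat) f g := forall j, (j <= m)%N -> f j = g j.

Definition P (m : nat) f : {poly K} := \poly_(i < m.+1) f i.

Lemma coefP m f j : (j <= m)%N -> (P m f)`_j = f j.
Proof. by move=> hj; rewrite coef_poly ltnS hj. Qed.

Lemma mulP m f g j : (j <= m)%N -> ps_mul f g j = (P m f * P m g)`_j.
Proof.
move=> hj; rewrite coefM /ps_mul; apply: eq_bigr => i _.
have hi : (i <= m)%N by rewrite -ltnS (leq_trans (ltn_ord i)).
by rewrite !coefP // (leq_trans (leq_subr _ _) hj).
Qed.

Lemma coefM_loc m (p p' q q' : {poly K}) :
  (forall j, (j <= m)%N -> p`_j = p'`_j) ->
  (forall j, (j <= m)%N -> q`_j = q'`_j) -> (p * q)`_m = (p' * q')`_m.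
Proof.
move=> hp hq; rewrite !coefM; apply: eq_bigr => i _.
by rewrite hp ?hq ?leq_subr // -ltnS.
Qed.

Lemma ps_mulA : associative (@ps_mul K).
Proof.
move=> f g h; apply: functional_extensionality => m.
rewrite (mulP f (ps_mul g h) (leqnn m)) (mulP (ps_mul f g) h (leqnn m)).
rewrite (@coefM_loc m _ (P m f) _ (P m g * P m h)) //; last first.
  by move=> j hj; rewrite coefP // (mulP _ _ hj).
rewrite mulrA; apply: coefM_loc => // j hj.
by rewrite coefP // (mulP _ _ hj).
Qed.

Lemma ps_mulC : commutative (@ps_mul K).
Proof.
move=> f g; apply: functional_extensionality => m.
by rewrite (mulP f g (leqnn m)) (mulP g f (leqnn m)) mulrC.
Qed.

Lemma ps_mul1 : left_id (ps_one K) (@ps_mul K).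
Proof.
move=> f; apply: functional_extensionality => m.
rewrite /ps_mul big_ord_recl /= /ps_one /ps_const /= mul1r subn0 big1 ?addr0 //.
by move=> i _; rewrite /bump /= mul0r.
Qed.

HB.instance Definition _ := Monoid.isComLaw.Build (ps K) (ps_one K) (@ps_mul K)
  ps_mulA ps_mulC ps_mul1.

End PSL.
Section PSL2.
Variable K : fieldType.
Implicit Types f g h : ps K.

Lemma mul0 f g : ps_mul f g 0 = f 0%N * g 0%N.
Proof. by rewrite /ps_mul big_ord1 subn0. Qed.

Lemma one0 : ps_one K 0 = 1. Proof. by []. Qed.

Lemma big0 (I : Type) (r : seq I) (Pr : pred I) (F : I -> ps K) :
  (\big[@ps_mul K/ps_one K]_(i <- r | Pr i) F i) 0%N = \prod_(i <- r | Pr i) F i 0%N.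
Proof. exact: (big_morph (fun f : ps K => f 0%N) mul0 one0). Qed.

Lemma exp0 f e : ps_exp f e 0%N = f 0%N ^+ e.
Proof. by elim: e => [|e IH] //=; rewrite mul0 -/(ps_exp f e) IH exprS. Qed.

Lemma inv0 f : ps_inv f 0%N = (f 0%N)^-1.
Proof. by []. Qed.

Lemma eqm_le m m' f g : (m' <= m)%N -> eqm m f g -> eqm m' f g.
Proof. by move=> h e j hj; apply: e; exact: leq_trans hj h. Qed.

Lemma eqm_mul m f f' g g' : eqm m f f' -> eqm m g g' -> eqm m (ps_mul f g) (ps_mul f' g').
Proof.
move=> ef eg j hj; rewrite /ps_mul; apply: eq_bigr => i _.
have hi : (i <= m)%N by rewrite (leq_trans _ hj) // -ltnS.
by rewrite ef // eg // (leq_trans (leq_subr _ _) hj).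
Qed.

Lemma eqm_add m f f' g g' : eqm m f f' -> eqm m g g' -> eqm m (ps_add f g) (ps_add f' g').
Proof. by move=> ef eg j hj; rewrite /ps_add ef ?eg. Qed.

Lemma eqm_scale m c f f' : eqm m f f' -> eqm m (ps_scale c f) (ps_scale c f').
Proof. by move=> ef j hj; rewrite /ps_scale ef. Qed.

Lemma eqm_refl m f : eqm m f f. Proof. by []. Qed.

Lemma eqm_exp m f f' e : eqm m f f' -> eqm m (ps_exp f e) (ps_exp f' e).
Proof.
move=> ef; elim: e => [|e IH] //=.
exact: eqm_mul.
Qed.

Lemma inv_seq_loc m f f' : eqm m f f' -> ps_inv_seq f m = ps_inv_seq f' m.
Proof.
elim: m => [|m IH] ef /=; first by rewrite ef.
rewrite IH; last exact: (eqm_le (leqnSn m) ef).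
congr (rcons _ (_ * _)); first by rewrite ef.
apply: eq_bigr => i _; by rewrite ef // leq_subr.
Qed.

Lemma eqm_inv m f f' : eqm m f f' -> eqm m (ps_inv f) (ps_inv f').
Proof.
move=> ef j hj; rewrite /ps_inv (@inv_seq_loc j f f') //.
exact: eqm_le hj ef.
Qed.

Lemma eqm_big m (I : Type) (r : seq I) (Pr : pred I) (F F' : I -> ps K) :
  (forall i, Pr i -> eqm m (F i) (F' i)) ->
  eqm m (\big[@ps_mul K/ps_one K]_(i <- r | Pr i) F i)
        (\big[@ps_mul K/ps_one K]_(i <- r | Pr i) F' i).
Proof.
move=> h; apply: (big_ind2 (eqm m)) => //.
by move=> *; apply: eqm_mul.
Qed.

Lemma split_sum m (G D : ps K) :
  \sum_(i < m.+2) G i * D (m.+1 - i)%N =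
  G 0%N * D m.+1 + \sum_(i < m) G i.+1 * D (m - i)%N + G m.+1 * D 0%N.
Proof.
rewrite big_ord_recr /= subnn big_ord_recl /= subn0; congr (_ + _ + _).
Qed.

Lemma mul_top m g g' d d' : eqm m g g' -> eqm m d d' -> d 0%N = 0 -> d' 0%N = 0 ->
  ps_mul g d m.+1 - ps_mul g' d' m.+1 = g 0%N * (d m.+1 - d' m.+1).
Proof.
move=> eg ed d0 d'0; rewrite /ps_mul !split_sum d0 d'0 !mulr0 !addr0 eg //.
have -> : \sum_(i < m) g i.+1 * d (m - i)%N = \sum_(i < m) g' i.+1 * d' (m - i)%N.
  by apply: eq_bigr => i _; rewrite eg // ?ed // ?leq_subr // (ltn_ord i).
by rewrite opprD addrACA subrr addr0 -mulrBr.
Qed.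

End PSL2.
Section RF.
Variable N : nat.

Lemma onebt_neq0 j : 1 + beta N * tvar N j != 0.
Proof.
rewrite /beta /tvar -tofracM -tofrac1 -tofracD tofrac_eq0.
apply/eqP => h; have := congr1 (meval (fun _ => (0:rat))) h.
rewrite mevalD mevalM !mevalXU meval1 meval0 mulr0 addr0 => /eqP.
by rewrite oner_eq0.
Qed.

Lemma tvar_inj a b : (0 < a <= N)%N -> (0 < b <= N)%N -> tvar N a = tvar N b -> a = b.
Proof.
move=> /andP[a0 aN] /andP[b0 bN]; rewrite /tvar => /eqP; rewrite tofrac_eq => /eqP h.
have hi : forall c, (0 < c <= N)%N -> nat_of_ord (@inord N c.-1) = c.-1.
  by move=> c /andP[c0 cN]; rewrite inordK // ltnS (leq_trans (leq_pred _) cN).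
have h2 : @inord N a.-1 = @inord N b.-1.
  case: (eqVneq (@inord N a.-1) (@inord N b.-1)) => // ne.
  pose v := fun i : 'I_N.+1 => if i == @inord N a.-1 then (1:rat) else 0.
  have := congr1 (meval v) h; rewrite !mevalXU /v eqxx eq_sym (negbTE ne).
  by move=> e; move: (oner_neq0 rat); rewrite e eqxx.
have := congr1 (@nat_of_ord N.+1) h2; rewrite (hi a) ?a0 // (hi b) ?b0 // => e.
by rewrite -(prednK a0) -(prednK b0) e.
Qed.

Lemma ominus_neq0 a b : (0 < a <= N)%N -> (0 < b <= N)%N -> a != b ->
  ominus (tvar N a) (tvar N b) != 0.
Proof.
move=> ha hb ab; rewrite /ominus; apply: mulf_neq0.
  rewrite subr_eq0; apply/eqP => /(tvar_inj ha hb) e.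
  by rewrite e eqxx in ab.
by rewrite invr_eq0; apply: onebt_neq0.
Qed.

End RF.
From mathcomp Require Import ring.
Lemma final_alg0 (F : fieldType) (e w u P Q : F) : u != 0 -> P != 0 -> Q != 0 -> e != 0 -> w != 0 ->
 - 1 / ((-1 * e) * (P * (u * w)^-1 * Q) / u) = e^-1 * (u * (u * w)) / (P * Q).
Proof. move=> u0 P0 Q0 e0 w0; field; by rewrite Q0 P0 e0 u0 w0 oppr_eq0 oner_eq0. Qed.

Lemma final_alg (F : fieldType) n (u P Q : F) : (0 < n)%N -> u != 0 -> P != 0 -> Q != 0 ->
 - 1 / ((-1)^+n * (P * (u^+n)^-1 * Q) / u) = (-1)^+n.-1 * u^+n.+1 / (P * Q).
Proof.
case: n => // n' _ u0 P0 Q0 /=.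
rewrite -[in RHS]invr_sign !exprS.
apply: final_alg0 => //; first by rewrite expf_neq0 // oppr_eq0 oner_eq0.
by rewrite expf_neq0.
Qed.
Section Main.
Variables n k : nat.
Variable l : {x : n.-tuple 'I_k.+1 | lam_pred x}.
Local Notation N := (n + k).
Local Notation K := (RatFun (n + k)).

Definition a (p : 'I_n) := Iidx l p.

Lemma a_range p : (0 < a p <= N)%N.
Proof.
rewrite /a /Iidx addnS ltn0Sn /= addnC -addSn leq_add //.
by rewrite -ltnS ltn_ord.
Qed.

Lemma j0_proof p : ((a p).-1 < N)%N.
Proof. by case/andP: (a_range p) => h1 h2; rewrite prednK. Qed.

Definition j0 p : 'I_N := Ordinal (j0_proof p).

Lemma j0E p : (j0 p).+1 = a p.
Proof. by rewrite /= prednK //; case/andP: (a_range p). Qed.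

Definition T p := tvar N (a p).
Definition s : K := (-1) ^+ n.

Definition Hs (y : 'I_n -> ps K) (i : 'I_n) : ps K :=
  ps_mul (ps_mul (PiY y) (ps_inv (ps_exp (ps_add (ps_one _) (ps_scale (beta N) (y i))) n)))
    (\big[@ps_mul _/ps_one _]_(j < N | j != j0 i) ps_ominus (y i) (tvar N j.+1)).

Lemma BAE_dec (y : 'I_n -> ps K) (i : 'I_n) : BAE_lhs y i =
  ps_add (ps_scale s (ps_mul (Hs y i) (ps_ominus (y i) (T i)))) (ps_q _).
Proof.
rewrite /BAE_lhs (bigD1 (j0 i)) //= j0E /Hs.
by rewrite (ps_mulC (ps_ominus _ _)) ps_mulA.
Qed.

Lemma eqm_ominus m (x x' : ps K) c : eqm m x x' -> eqm m (ps_ominus x c) (ps_ominus x' c).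
Proof. by move=> e j hj; rewrite /ps_ominus e. Qed.

Lemma eqm_Hs m (y y' : 'I_n -> ps K) (i : 'I_n) : (forall p, eqm m (y p) (y' p)) -> eqm m (Hs y i) (Hs y' i).
Proof.
move=> e; rewrite /Hs.
apply: eqm_mul; last by apply: eqm_big => j _; apply: eqm_ominus.
apply: eqm_mul; first by apply: eqm_big => j _; apply: eqm_add => //; apply: eqm_scale.
by apply: eqm_inv; apply: eqm_exp; apply: eqm_add => //; apply: eqm_scale.
Qed.

Lemma eqm_BAE m (y y' : 'I_n -> ps K) (i : 'I_n) : (forall p, eqm m (y p) (y' p)) -> eqm m (BAE_lhs y i) (BAE_lhs y' i).
Proof.
move=> e; rewrite !BAE_dec; apply: eqm_add => //; apply: eqm_scale.
by apply: eqm_mul; [apply: eqm_Hs | apply: eqm_ominus].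
Qed.

Definition H0 i : K := PiT l * ((1 + beta N * T i) ^+ n)^-1 *
  \prod_(j < N | j != j0 i) ominus (T i) (tvar N j.+1).

Lemma Hs0 (y : 'I_n -> ps K) (i : 'I_n) : (forall p, y p 0%N = T p) -> Hs y i 0%N = H0 i.
Proof.
move=> y0; rewrite /Hs !mul0 inv0 exp0 /PiY !big0 /H0 /PiT.
congr (_ * _ * _).
- by apply: eq_bigr => p _; rewrite /ps_add /ps_scale y0.
- by rewrite /ps_add /ps_scale y0.
- by apply: eq_bigr => j _; rewrite /ps_ominus /ominus y0.
Qed.

Definition c i : K := s * H0 i / (1 + beta N * T i).

Lemma PiT_neq0 : PiT l != 0.
Proof. by rewrite /PiT; apply/prodf_neq0 => p _; apply: onebt_neq0. Qed.

Lemma c_neq0 i : c i != 0.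
Proof.
rewrite /c /s /H0.
apply: mulf_neq0; last by rewrite invr_eq0; exact: onebt_neq0.
apply: mulf_neq0; first by rewrite expf_neq0 // oppr_eq0 oner_eq0.
apply: mulf_neq0.
  apply: mulf_neq0; first exact: PiT_neq0.
  by rewrite invr_eq0 expf_neq0 //; exact: onebt_neq0.
apply/prodf_neq0 => j hj; apply: ominus_neq0; first exact: a_range.
  by rewrite ltn0Sn /= ltn_ord.
by rewrite -j0E eq_sym eqSS.
Qed.

Lemma BAE_top m (y y' : 'I_n -> ps K) (i : 'I_n) : (forall p, eqm m (y p) (y' p)) ->
  (forall p, y p 0%N = T p) -> (forall p, y' p 0%N = T p) ->
  BAE_lhs y i m.+1 - BAE_lhs y' i m.+1 = c i * (y i m.+1 - y' i m.+1).
Proof.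
move=> e y0 y'0; rewrite !BAE_dec /ps_add /ps_scale.
rewrite opprD addrACA subrr addr0 -mulrBr mul_top.
- rewrite Hs0 // /ps_ominus /ps_const /c /=.
  by rewrite !subr0; ring.
- exact: eqm_Hs.
- exact: eqm_ominus.
- by rewrite /ps_ominus y0 /ps_const /= subrr mul0r.
- by rewrite /ps_ominus y'0 /ps_const /= subrr mul0r.
Qed.

Lemma BAE_zero (y : 'I_n -> ps K) (i : 'I_n) : y i 0%N = T i -> BAE_lhs y i 0%N = 0.
Proof.
move=> y0; rewrite BAE_dec /ps_add /ps_scale mul0 /ps_ominus y0 /ps_const /=.
by rewrite subrr mul0r !mulr0 /ps_q /= addr0.
Qed.

Definition Y0 : 'I_n -> ps K := fun p => ps_const (T p).

Fixpoint Ys (m : nat) : 'I_n -> ps K :=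
  match m with
  | 0 => Y0
  | m'.+1 => fun p j => if j == m'.+1 then Ys m' p j - @BAE_lhs N n (Ys m') p j / c p
                        else Ys m' p j
  end.

Definition ysol : 'I_n -> ps K := fun p j => Ys j p j.

Lemma Ys0 m p : Ys m p 0%N = T p.
Proof. by elim: m p => [|m IH] p //=. Qed.

Lemma Ys_step m p : eqm m (Ys m p) (Ys m.+1 p).
Proof.
move=> j hj /=; case: eqP => // ej; by move: hj; rewrite ej ltnn.
Qed.

Lemma Ys_top m p : Ys m.+1 p m.+1 = Ys m p m.+1 - BAE_lhs (Ys m) p m.+1 / c p.
Proof. by rewrite /= eqxx. Qed.

Lemma Ys_solve m p : BAE_lhs (Ys m.+1) p m.+1 = 0.
Proof.
have := @BAE_top m (Ys m) (Ys m.+1) p (fun q => @Ys_step m q) (@Ys0 m) (@Ys0 m.+1).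
have ee : forall a b : K, a - (a - b) = b by move=> a b; rewrite opprB addrC subrK.
rewrite Ys_top ee mulrC divfK ?c_neq0 // => h.
apply: oppr_inj; apply: (addrI (BAE_lhs (Ys m) p m.+1)).
by rewrite oppr0 addr0.
Qed.

Lemma ysol_eqm m p : eqm m (ysol p) (Ys m p).
Proof.
move=> j hj; rewrite /ysol; elim: m hj => [|m IH].
  by rewrite leqn0 => /eqP ->.
rewrite leq_eqVlt => /orP[/eqP -> //|hj].
by rewrite IH // (@Ys_step m p j hj).
Qed.

Lemma ysol_BAE i m : BAE_lhs ysol i m = 0.
Proof.
rewrite (@eqm_BAE m ysol (Ys m)) //; last by move=> p; apply: ysol_eqm.
case: m => [|m]; first by apply: BAE_zero; rewrite Ys0.
exact: Ys_solve.
Qed.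

Lemma ysol0 p : ysol p 0%N = T p.
Proof. by rewrite /ysol Ys0. Qed.

Lemma ysol1 p : ysol p 1%N = first_coef l (a p).
Proof.
rewrite /ysol /= BAE_dec /ps_add /ps_scale /Y0 /ps_const /= /ps_q /=.
rewrite (_ : ps_mul _ _ 1%N = 0); last first.
  by rewrite /ps_mul big1 // => j _; rewrite /ps_ominus /ps_const subrr mul0r mulr0.
rewrite mulr0 add0r add0r /c /H0 /first_coef /s.
have -> : \prod_(j < N | j.+1 != a p) ominus (tvar N (a p)) (tvar N j.+1) =
          \prod_(j < N | j != j0 p) ominus (T p) (tvar N j.+1).
  by apply: eq_bigl => j; rewrite -j0E eqSS.
rewrite -mulNr final_alg //.
- exact: leq_ltn_trans (leq0n p) (ltn_ord p).
- exact: onebt_neq0.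
- exact: PiT_neq0.
apply/prodf_neq0 => j hj; apply: ominus_neq0; first exact: a_range.
  by rewrite ltn0Sn /= ltn_ord.
by rewrite -j0E eq_sym eqSS.
Qed.

End Main.

Lemma card_Lam n k : #|{: {x : n.-tuple 'I_k.+1 | lam_pred x}}| = 'C(n + k, n).
Proof.
rewrite card_sig -card_sorted_tuples.
have inj : injective (fun t : n.-tuple 'I_k.+1 => rev_tuple t).
  move=> x y /(congr1 val) /= /(congr1 rev); rewrite !revK; exact: val_inj.
rewrite -(card_preimset _ inj); apply: eq_card => x.
rewrite !inE /lam_pred /= map_rev rev_sorted sorted_map.
reflexivity.
Qed.

Lemma ysol_inj n k (l l' : {x : n.-tuple 'I_k.+1 | lam_pred x}) :
  l != l' -> ysol l <> ysol l'.
Proof.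
move=> ne e; case/eqP: ne; apply: val_inj; apply: eq_from_tnth => i.
have := congr1 (fun y => y (rev_ord i) 0%N) e; rewrite /= !ysol0 /T.
move/(tvar_inj (a_range _ _) (a_range _ _)); rewrite /a /Iidx rev_ordK.
by move/addIn/val_inj.
Qed.

Theorem mainTheorem8 (n k : nat) :
  #|{: Lam n k}| = 'C(n + k, n) /\
  exists y : Lam n k -> 'I_n -> ps (RatFun (n + k)),
    (forall l (i : 'I_n) (m : nat), BAE_lhs (y l) i m = 0) /\
    (forall l l', l != l' -> y l <> y l') /\
    (forall l (p : 'I_n),
        y l p 0%N = tvar (n + k) (Iidx l p) /\
        y l p 1%N = first_coef l (Iidx l p)).
Proof.
split; first exact: card_Lam.
exists (fun l => ysol l); split; first by move=> l i m; apply: ysol_BAE.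
split; first by move=> l l'; apply: ysol_inj.
by move=> l p; split; [apply: ysol0 | apply: ysol1].
Qed.
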